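(* Let $G$ be a bipartite graph with ordered colour classes $A,B$ whose edge set is partitioned into $k$ monotone matchings $E_1,\dots,E_k$. Let $G'$ be the unraveling of $G$ with respect to this partition. Then $G'$ is $3$-monotone.
   Context: For a bipartite graph with ordered colour classes $(v_1,\dots,v_n)$ and $(w_1,\dots,w_m)$, edges $v_iw_j$ and $v_kw_\ell$ cross if $i<k$ and $\ell<j$; a matching is monotone if no two of its edges cross; a bipartite graph is $d$-monotone if, for some ordering of its colour classes, its edge set is the union of $d$ monotone matchings. Given a graph $G$ with a partition $E_1,\dots,E_k$ of $E(G)$, the unraveling $G'$ has vertex set $V(G)\times[1,k]=\{v_i: v\in V(G), i\in[1,k]\}$, with an edge $v_iw_i$ for each edge $vw\in E_i$ and each $i\in[1,k]$, and an edge $v_iv_{i+1}$ for each $v\in V(G)$ and $i\in[1,k-1]$. *)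

(* Defs.v *)
From mathcomp Require Import all_boot.
Set Implicit Arguments. Unset Strict Implicit. Unset Printing Implicit Defensive.

(* ---------- The input graph G ----------
   Colour class A = (v_0,...,v_{n-1}) is 'I_n, B = (w_0,...,w_{m-1}) is 'I_m,
   both ordered by their natural order. *)

Definition bip_monotone_matching (n m : nat) (M : 'I_n -> 'I_m -> bool) : Prop :=
  forall (i k : 'I_n) (j l : 'I_m), M i j -> M k l -> (i, j) != (k, l) ->
    [/\ i != k, j != l & ~~ ((i < k) && (l < j))].

Definition monotone_partition (n m k : nat) (E : 'I_n -> 'I_m -> bool)
    (c : 'I_n -> 'I_m -> 'I_k) : Prop :=
  forall s : 'I_k, bip_monotone_matching (fun i j => E i j && (c i j == s)).

(* ---------- The unraveling G' ----------
   Vertex set V(G) x [1,k], encoded as ('I_n + 'I_m) * 'I_k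
   (index s : 'I_k stands for s+1 in [1,k]). *)
Definition unravel_adj (n m k : nat) (E : 'I_n -> 'I_m -> bool)
    (c : 'I_n -> 'I_m -> 'I_k) : rel (('I_n + 'I_m) * 'I_k)%type :=
  fun x y =>
    let: (u, s) := x in
    let: (u', t) := y in
    ((u == u') && ((s.+1 == t :> nat) || (t.+1 == s :> nat)))
    || match u, u' with
       | inl i, inr j => (s == t) && E i j && (c i j == s)
       | inr j, inl i => (s == t) && E i j && (c i j == s)
       | _, _ => false
       end.

(* ---------- d-monotone for a general graph (V, adj) ----------
   A bipartition is given by X (one colour class) and its complement;
   the orderings of both colour classes are encoded by an injective
   rank function r : V -> nat; edges are taken as pairs (a,b), a in X,
   b not in X. *)
Definition crossing (V : Type) (r : V -> nat) (a b a' b' : V) : bool :=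
  (r a < r a') && (r b' < r b).

Definition monotone_matching (V : eqType) (r : V -> nat) (M : V -> V -> bool) : Prop :=
  forall a b a' b', M a b -> M a' b' -> (a, b) != (a', b') ->
    [/\ a != a', b != b' & ~~ crossing r a b a' b'].

Definition d_monotone (V : finType) (adj : rel V) (d : nat) : Prop :=
  exists (X : {set V}) (r : V -> nat) (col : V -> V -> 'I_d),
    [/\ injective r,
        (forall x y, adj x y -> (x \in X) != (y \in X)) &
        (forall t : 'I_d, monotone_matching r
            (fun a b => [&& a \in X, b \notin X, adj a b & col a b == t]))].

(* Main.v *)
Require Import Defs.
From mathcomp Require Import all_boot.
From mathcomp Require Import zify.
Set Implicit Arguments. Unset Strict Implicit.

Section S.
Variables (n m k : nat) (E : 'I_n -> 'I_m -> bool) (c : 'I_n -> 'I_m -> 'I_k).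
Local Notation V := (('I_n + 'I_m) * 'I_k)%type.
Local Notation N := (n + m).

Definition code (u : 'I_n + 'I_m) : nat :=
  match u with inl i => val i | inr j => n + val j end.
Definition rk (x : V) : nat := x.2 * N + code x.1.
Definition inXb (x : V) : bool :=
  match x.1 with inl _ => ~~ odd x.2 | inr _ => odd x.2 end.
Definition colf (x y : V) : 'I_3 :=
  if (x.2 : nat) == y.2 then @Ordinal 3 0 isT
  else if (x.2 : nat) < y.2 then @Ordinal 3 1 isT else @Ordinal 3 2 isT.

Lemma code_lt u : code u < N.
Proof. case: u => [i|j] /=; [have := ltn_ord i | have := ltn_ord j]; lia. Qed.

Lemma code_inj : injective code.
Proof.
case=> [i|j] [i'|j'] /= h.
- by congr inl; apply: val_inj.
- have := ltn_ord i; lia.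
- have := ltn_ord i'; lia.
- by congr inr; apply: val_inj => /=; lia.
Qed.

Lemma layer_lt (x y : V) : x.2 < y.2 -> rk x < rk y.
Proof.
move=> h; rewrite /rk.
have h1 := code_lt x.1.
have h2 : x.2.+1 * N <= y.2 * N by rewrite leq_mul2r h orbT.
rewrite mulSn in h2; lia.
Qed.

Lemma rk_inj : injective rk.
Proof.
case=> u s [u' t] /= h.
have e : val s = val t.
  case: (ltngtP s t) => // hst.
  - by have := @layer_lt (u, s) (u', t) hst; rewrite h ltnn.
  - by have := @layer_lt (u', t) (u, s) hst; rewrite h ltnn.
have es : s = t by apply: val_inj.
subst t; rewrite /rk /= in h.
have : code u = code u' by lia.
by move/code_inj ->.
Qed.

Lemma rk_le (x y : V) : rk x < rk y -> x.2 <= y.2.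
Proof. move=> h; rewrite leqNgt; apply/negP => /layer_lt; lia. Qed.

Definition adj := unravel_adj E c.

Lemma vert_up (a b : V) : adj a b -> a.2 < b.2 ->
  b.1 = a.1 /\ val b.2 = (val a.2).+1.
Proof.
case: a b => [u s] [u' t] /=; rewrite /adj /unravel_adj.
case/orP.
  case/andP => /eqP <- /orP [] /eqP h ht; split => //; lia.
case: u u' => [i|j] [i'|j'] //; case/andP => /andP [/eqP -> _] _;
  by rewrite ltnn.
Qed.

Lemma vert_down (a b : V) : adj a b -> b.2 < a.2 ->
  a.1 = b.1 /\ val a.2 = (val b.2).+1.
Proof.
case: a b => [u s] [u' t] /=; rewrite /adj /unravel_adj.
case/orP.
  case/andP => /eqP <- /orP [] /eqP h ht; split => //; lia.
case: u u' => [i|j] [i'|j'] //; case/andP => /andP [/eqP -> _] _;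
  by rewrite ltnn.
Qed.

Lemma horiz (a b : V) : adj a b -> val a.2 = val b.2 ->
  inXb a -> ~~ inXb b ->
  exists i j, [/\ E i j, c i j = a.2, b.2 = a.2 &
    (a.1 = inl i /\ b.1 = inr j /\ ~~ odd a.2) \/
    (a.1 = inr j /\ b.1 = inl i /\ odd a.2)].
Proof.
case: a b => [u s] [u' t] /= hadj e; have et : t = s by apply: val_inj.
subst t; move: hadj; rewrite /adj /unravel_adj /inXb /=.
case/orP.
  case/andP => _ /orP [] /eqP h; lia.
case: u u' => [i|j] [i'|j'] //; case/andP => /andP [_ hE] /eqP hc.
- move=> h1 h2; exists i, j'; split => //; left; split => //.
- move=> h1 h2; exists i', j; split => //; right; split => //.
Qed.

Definition X : {set V} := [set x | inXb x].

Lemma bip x y : adj x y -> (x \in X) != (y \in X).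
Proof.
rewrite !inE; case: x y => [u s] [u' t]; rewrite /adj /unravel_adj /inXb /=.
case/orP.
  case/andP => /eqP <- /orP [] /eqP h; case: u => ? /=;
  rewrite -h /= ?negbK; by case: (odd _).
case: u u' => [i|j] [i'|j'] //; case/andP => /andP [/eqP -> _] _ /=;
  by case: (odd _).
Qed.

Lemma mono (HP : monotone_partition E c) (t : 'I_3) : monotone_matching rk
  (fun a b => [&& a \in X, b \notin X, adj a b & colf a b == t]).
Proof.
move=> a b a' b' /and4P [ha hb hab hc] /and4P [ha' hb' hab' hc'] hne.
rewrite !inE in ha hb ha' hb'.
rewrite /colf in hc hc'.
have Hcr : forall (p q : V), (q.1 = p.1 /\ nat_of_ord q.2 = (nat_of_ord p.2).+1) -> rk q = rk p + N.
  by move=> [u s] [u' s'] /= [-> e]; rewrite /rk /= e mulSn; lia.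
have Hne1 : forall (p q p' q' : V), (q.1 = p.1 /\ nat_of_ord q.2 = (nat_of_ord p.2).+1) ->
   (q'.1 = p'.1 /\ nat_of_ord q'.2 = (nat_of_ord p'.2).+1) -> (p == p') = (q == q').
  move=> [u s] [v w] [u' s'] [v' w'] /= [-> e] [-> e'].
  apply/eqP/eqP => [[-> es]|[-> ew]].
    by congr pair; apply: val_inj => /=; rewrite e e' es.
  have ew2 : nat_of_ord w = w' by rewrite ew.
  congr pair; apply/val_inj => /=; lia.
have Hpair : forall (p q p' q' : V), (p, q) != (p', q') -> (p == p') = (q == q') ->
   p != p' /\ q != q'.
  move=> p q p' q' hn hpq; case: eqP hpq => [ep|ep] /=.
    by move/esym/eqP => eq; move: hn; rewrite ep eq eqxx.
  by move/esym/negbT.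
case: (ltngtP a.2 b.2) hc => hlt hc; case: (ltngtP a'.2 b'.2) hc' => hlt' hc';
  try by move: hc hc' => /eqP <- /eqP/(congr1 val).
- have Hu := vert_up hab hlt.
  have Hu' := vert_up hab' hlt'.
  have [n1 n2] := Hpair _ _ _ _ hne (Hne1 _ _ _ _ Hu Hu').
  split => //; rewrite /crossing (Hcr _ _ Hu) (Hcr _ _ Hu'); apply/negP; lia.
- have Hd := vert_down hab hlt.
  have Hd' := vert_down hab' hlt'.
  have [n1 n2] := Hpair _ _ _ _ hne (esym (Hne1 _ _ _ _ Hd Hd')).
  split => //; rewrite /crossing (Hcr _ _ Hd) (Hcr _ _ Hd'); apply/negP; lia.
- have [i [j [hE hC hb2 hor]]] := horiz hab hlt ha hb.
  have [i' [j' [hE' hC' hb2' hor']]] := horiz hab' hlt' ha' hb'.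
  move: hab ha hb hlt hc hC hb2 hor hab' ha' hb' hlt' hc' hC' hb2' hor' hne.
  case: a b => [u s] [v w]; case: a' b' => [u' s'] [v' w'] /=.
  move=> _ _ _ _ _ hC -> hor _ _ _ _ _ hC' -> hor' hne.
  rewrite /crossing.
  case: (ltngtP s s') => hss.
  + have h1 : s' != s by rewrite neq_ltn hss orbT.
    split.
    * by apply/negP => /eqP [_ e]; rewrite e eqxx in h1.
    * by apply/negP => /eqP [_ e]; rewrite e eqxx in h1.
    * have := @layer_lt (v, s) (v', s') hss; rewrite /rk /=; lia.
  + have h1 : s != s' by rewrite neq_ltn hss orbT.
    split.
    * by apply/negP => /eqP [_ e]; rewrite e eqxx in h1.
    * by apply/negP => /eqP [_ e]; rewrite e eqxx in h1.
    * have := @layer_lt (u', s') (u, s) hss; rewrite /rk /=; lia.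
  + have es : s = s' by apply: val_inj.
    move: hne hC' hor'; rewrite -es => hne hC' hor'.
    have mm := HP s. move: hne.
    case: hor => [[-> [-> ho]]|[-> [-> ho]]];
    case: hor' => [[-> [-> ho']]|[-> [-> ho']]]; try by [rewrite ho in ho' | rewrite ho' in ho].
    all: move=> hne.
    * have hn : (i, j) != (i', j').
        by apply/negP => /eqP [ei ej]; rewrite ei ej in hne; move/negP: hne; apply.
      have [h1 h2 h3] := mm i i' j j' (introT andP (conj hE (introT eqP hC)))
         (introT andP (conj hE' (introT eqP hC'))) hn.
      split.
      - by apply/negP => /eqP [e]; rewrite e eqxx in h1.
      - by apply/negP => /eqP [e]; rewrite e eqxx in h2.
      - by rewrite /rk /= !ltn_add2l.
    * have hn : (i', j') != (i, j).
        by apply/negP => /eqP [ei ej]; rewrite ei ej in hne; move/negP: hne; apply.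
      have [h1 h2 h3] := mm i' i j' j (introT andP (conj hE' (introT eqP hC')))
         (introT andP (conj hE (introT eqP hC))) hn.
      split.
      - by apply/negP => /eqP [e]; rewrite e eqxx in h2.
      - by apply/negP => /eqP [e]; rewrite e eqxx in h1.
      - by rewrite /rk /= !ltn_add2l andbC.
Qed.

Lemma main (HP : monotone_partition E c) : d_monotone (unravel_adj E c) 3.
Proof.
exists X, rk, colf; split.
- exact: rk_inj.
- exact: bip.
- exact: mono.
Qed.
End S.

Theorem lemma8 (n m k : nat) (E : 'I_n -> 'I_m -> bool) (c : 'I_n -> 'I_m -> 'I_k) :
  monotone_partition E c -> d_monotone (unravel_adj E c) 3.
Proof. exact: main. Qed.
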